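(* Let $L_{\mathcal{F}}$ and $L_{\mathcal{R}}$ be Lipschitz constants of $\mathcal{F}$ and $\mathcal{R}$ over $\Omega_\theta$, and suppose $\beta>L_{\mathcal{F}}+L_{\mathcal{R}}$. If $\bar z\in\mathcal{Z}$ with $\mathcal{O}(\bar z)<\theta$ is a d-stationary point of problem (LRP), then $\bar z\in\Omega_1$ and $\bar z$ is a d-stationary point of problem (RP) and of problem (R).
   Context: Let $N,N_0,N_1$ be positive integers, $X=(x_1,\ldots,x_N)\in\mathbb{R}^{N_0\times N}$ a given data matrix, and $\lambda_1,\lambda_2,\beta>0$ given parameters. For a real vector $y$, $(y)_+=\max\{y,0\}$ componentwise; $e$ denotes the all-ones vector of $\mathbb{R}^{N_1}$. For a matrix $Y$, $\|Y\|_F$ is the Frobenius norm and $\|Y\|_1$ the maximum absolute column sum. The variable is $z=(\mathrm{vec}(W)^\top,b^\top,\mathrm{vec}(V)^\top)^\top\in\mathbb{R}^{N_2}$, $N_2=N_0N_1+N_1+N_0+N_1N$, where $W\in\mathbb{R}^{N_1\times N_0}$, $b=(b_1^\top,b_2^\top)^\top$ with $b_1\in\mathbb{R}^{N_1}$, $b_2\in\mathbb{R}^{N_0}$, $V=(v_1,\ldots,v_N)\in\mathbb{R}^{N_1\times N}$, and vec is columnwise vectorization. Define $\mathcal{F}(z)=\frac1N\sum_{n=1}^N\|(W^\top v_n+b_2)_+-x_n\|_2^2$, $\mathcal{R}(z)=\lambda_1\sum_{n=1}^N e^\top v_n+\lambda_2\|W\|_F^2$, $\mathcal{P}(z)=\beta\sum_{n=1}^N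 e^\top(v_n-(Wx_n+b_1)_+)$, and $\mathcal{O}=\mathcal{F}+\mathcal{R}+\mathcal{P}$. Let $\Omega_1=\{z: v_n=(Wx_n+b_1)_+,\ n=1,\ldots,N\}$, $\Omega_2=\{z: v_n\ge (Wx_n+b_1)_+,\ n=1,\ldots,N\}$. Fix $\theta>\frac1N\|X\|_F^2$ and set $\alpha=\max\left\{\frac{\theta}{\lambda_1}+\sqrt{\frac{N_1N_0\theta}{\lambda_2}}\|X\|_1,\ \frac{\theta\sqrt{N_1N_0\theta}}{\lambda_1\sqrt{\lambda_2}}+\sqrt{N\theta}+\|X\|_1\right\}$. Let $\Omega_3=\{z:\|b\|_\infty\le\alpha\}$, $\mathcal{Z}=\Omega_2\cap\Omega_3$, $\Omega_\theta=\{z\in\Omega_2:\mathcal{O}(z)\le\theta\}$. Problem (R): minimize $\mathcal{F}(z)+\mathcal{R}(z)$ over $\Omega_1$; problem (RP): minimize $\mathcal{O}(z)$ over $\Omega_2$; problem (LRP): minimize $\mathcal{O}(z)$ over $\mathcal{Z}$. For a directionally differentiable $f$, $f'(y;d)=\lim_{t\downarrow0}(f(y+td)-f(y))/t$ ($\mathcal{F}$, $\mathcal{O}$ are piecewise smooth and locally Lipschitz, hence directionally differentiable). For a set $\Omega$ and $\bar y\in\Omega$, the tangent cone is $\mathcal{T}_\Omega(\bar y)=\{d: d=\lim (y-\bar y)/\tau \text{ for some } y\in\Omega,\ y\to\bar y,\ \tau\downarrow0\}$. A point $\bar z\in\Omega_1$ is a d-stationary point of (R) if $\mathcal{F}'(\bar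 z;d)+\nabla\mathcal{R}(\bar z)^\top d\ge0$ for all $d\in\mathcal{T}_{\Omega_1}(\bar z)$; $\bar z\in\Omega_2$ is a d-stationary point of (RP) if $\mathcal{O}'(\bar z;d)\ge0$ for all $d\in\mathcal{T}_{\Omega_2}(\bar z)$; $\bar z\in\mathcal{Z}$ is a d-stationary point of (LRP) if $\mathcal{O}'(\bar z;d)\ge0$ for all $d\in\mathcal{T}_{\mathcal{Z}}(\bar z)$. *)

(* Defs.v *)
From HB Require Import structures.
From mathcomp Require Import all_boot all_order all_algebra.
From mathcomp Require Import all_classical all_reals all_analysis.
Set Implicit Arguments. Unset Strict Implicit. Unset Printing Implicit Defensive.
Import Order.TTheory GRing.Theory Num.Theory.
Import numFieldNormedType.Exports.
Local Open Scope classical_set_scope.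
Local Open Scope ring_scope.

(* The variable z = (vec W, b = (b1;b2), vec V). *)
Record var (R : realType) (N0 N1 N : nat) := Var {
  zW  : 'M[R]_(N1, N0);
  zb1 : 'cV[R]_N1;
  zb2 : 'cV[R]_N0;
  zV  : 'M[R]_(N1, N) }.

Section Defs.
Variables (R : realType) (N0 N1 N : nat).
Local Notation V := (var R N0 N1 N).

Definition vadd (z z' : V) : V :=
  Var (zW z + zW z') (zb1 z + zb1 z') (zb2 z + zb2 z') (zV z + zV z').
Definition vscale (t : R) (z : V) : V :=
  Var (t *: zW z) (t *: zb1 z) (t *: zb2 z) (t *: zV z).
Definition vsub (z z' : V) : V := vadd z (vscale (-1) z').

Definition sqF {m n : nat} (A : 'M[R]_(m, n)) : R := \sum_i \sum_j A i j ^+ 2.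
Definition normF {m n : nat} (A : 'M[R]_(m, n)) : R := Num.sqrt (sqF A).
Definition norm1 {m n : nat} (A : 'M[R]_(m, n)) : R :=
  \big[Num.max/0]_(j < n) \sum_(i < m) `|A i j|.
Definition normInf {m n : nat} (A : 'M[R]_(m, n)) : R :=
  \big[Num.max/0]_(i < m) \big[Num.max/0]_(j < n) `|A i j|.

Definition znorm (z : V) : R :=
  Num.sqrt (sqF (zW z) + sqF (zb1 z) + sqF (zb2 z) + sqF (zV z)).
Definition bnormInf (z : V) : R := Num.max (normInf (zb1 z)) (normInf (zb2 z)).

Definition relu {m n : nat} (A : 'M[R]_(m, n)) : 'M[R]_(m, n) :=
  map_mx (fun a => Num.max a 0) A.

Variable X : 'M[R]_(N0, N).
Variables (lam1 lam2 beta : R).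

Definition Fobj (z : V) : R :=
  N%:R^-1 * \sum_(n < N) sqF (relu ((zW z)^T *m col n (zV z) + zb2 z) - col n X).
Definition Robj (z : V) : R :=
  lam1 * (\sum_(n < N) \sum_(i < N1) zV z i n) + lam2 * sqF (zW z).
Definition Pobj (z : V) : R :=
  beta * \sum_(n < N) \sum_(i < N1)
           (zV z i n - relu (zW z *m col n X + zb1 z) i ord0).
Definition Oobj (z : V) : R := Fobj z + Robj z + Pobj z.

Definition gradR_dot (z d : V) : R :=
  lam1 * (\sum_(n < N) \sum_(i < N1) zV d i n)
  + lam2 * (2 * \sum_i \sum_j zW z i j * zW d i j).

Definition Omega1 : set V :=
  [set z | forall n : 'I_N, col n (zV z) = relu (zW z *m col n X + zb1 z)].
Definition Omega2 : set V :=
  [set z | forall (n : 'I_N) (i : 'I_N1),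
      relu (zW z *m col n X + zb1 z) i ord0 <= zV z i n].
Definition Omega3 (alpha : R) : set V := [set z | bnormInf z <= alpha].
Definition Zset (alpha : R) : set V := Omega2 `&` Omega3 alpha.
Definition Omega_theta (theta : R) : set V := [set z | Omega2 z /\ Oobj z <= theta].

Definition alpha_of (theta : R) : R :=
  Num.max (theta / lam1 + Num.sqrt ((N1 * N0)%:R * theta / lam2) * norm1 X)
          (theta * Num.sqrt ((N1 * N0)%:R * theta) / (lam1 * Num.sqrt lam2)
           + Num.sqrt (N%:R * theta) + norm1 X).

End Defs.

Section Generic.
Variables (R : realType) (N0 N1 N : nat).
Local Notation V := (var R N0 N1 N).

Definition lip_const_on (f : V -> R) (S : set V) (L : R) : Prop :=
  0 <= L /\ forall z z', S z -> S z' -> `|f z - f z'| <= L * znorm (vsub z z').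

Definition is_dirderiv (f : V -> R) (y d : V) (l : R) : Prop :=
  (fun t : R => (f (vadd y (vscale t d)) - f y) / t) @ 0^'+ --> l.

Definition tangent_cone (S : set V) (ybar : V) : set V :=
  [set d | exists (y : nat -> V) (tau : nat -> R),
     (forall k, S (y k)) /\ (forall k, 0 < tau k) /\
     tau @ \oo --> 0 /\
     (fun k => znorm (vsub (y k) ybar)) @ \oo --> 0 /\
     (fun k => znorm (vsub (vscale (tau k)^-1 (vsub (y k) ybar)) d)) @ \oo --> 0].

Definition dstat_on (f : V -> R) (S : set V) (zbar : V) : Prop :=
  S zbar /\ forall d, tangent_cone S zbar d ->
    forall l, is_dirderiv f zbar d l -> 0 <= l.
End Generic.

Definition dstat_R (R : realType) (N0 N1 N : nat) (X : 'M[R]_(N0, N))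
    (lam1 lam2 : R) (zbar : var R N0 N1 N) : Prop :=
  Omega1 X zbar /\ forall d, tangent_cone (Omega1 X) zbar d ->
    forall l, is_dirderiv (Fobj X) zbar d l ->
      0 <= l + gradR_dot lam1 lam2 zbar d.

(* Main.v *)
Require Import Defs.
From HB Require Import structures.
From mathcomp Require Import all_boot all_order all_algebra.
From mathcomp Require Import all_classical all_reals all_analysis.
From mathcomp Require Import ring lra.
Import Order.TTheory GRing.Theory Num.Theory.
Import numFieldNormedType.Exports.
Local Open Scope classical_set_scope.
Local Open Scope ring_scope.

Section HD.
Context {R : realType}.

Definition HD0 (f : R -> R) (q : R) : Prop :=
  (fun t => (f t - f 0) / t) @ (0:R)^'+ --> q.

Lemma cvg_neq {T : Type} (F : set_system T) {FF : Filter F} (f g : T -> R) (l : R) :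
  (\forall t \near F, f t = g t) -> g @ F --> l -> f @ F --> l.
Proof.
move=> e h; apply: cvg_trans h; apply: near_eq_cvg.
by apply: filterS e => t /esym.
Qed.

Lemma cvg_id_right : (fun t : R => t) @ (0:R)^'+ --> (0:R).
Proof. exact: (cvg_at_right_filter (cvg_id)). Qed.

Lemma HD0_ext f g q : (forall t, f t = g t) -> HD0 g q -> HD0 f q.
Proof. by move=> e; have -> : f = g by apply: funext. Qed.

Lemma HD0_cont f q : HD0 f q -> f @ (0:R)^'+ --> f 0.
Proof.
move=> h.
have -> : f 0 = f 0 + 0 * q by rewrite mul0r addr0.
have L : (fun t => f 0 + t * ((f t - f 0) / t)) @ (0:R)^'+ --> f 0 + 0 * q.
  apply: cvgD; first exact: cvg_cst.
  apply: cvgM; [exact: cvg_id_right | exact: h].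
apply: cvg_neq L; near=> t.
have t0 : t != 0 by apply: lt0r_neq0; near: t; exact: nbhs_right_gt.
by rewrite mulrC divfK // addrC subrK.
Unshelve. all: by end_near. Qed.

Arguments HD0_cont {f q}.

Lemma HD0_lin a c : HD0 (fun t => a + t * c) c.
Proof.
rewrite /HD0; apply: cvg_neq (cvg_cst c); near=> t.
have t0 : t != 0 by apply: lt0r_neq0; near: t; exact: nbhs_right_gt.
by rewrite mul0r addr0 addrC addKr mulrC mulKf.
Unshelve. all: by end_near. Qed.

Lemma HD0_cst a : HD0 (fun _ => a) 0.
Proof.
rewrite /HD0; under eq_fun do rewrite subrr mul0r.
exact: cvg_cst.
Qed.

Lemma HD0_add f g q s : HD0 f q -> HD0 g s -> HD0 (fun t => f t + g t) (q + s).
Proof.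
move=> hf hg; rewrite /HD0.
under eq_fun do rewrite opprD addrACA mulrDl.
exact: cvgD.
Qed.

Lemma HD0_scale c f q : HD0 f q -> HD0 (fun t => c * f t) (c * q).
Proof.
move=> hf; rewrite /HD0.
under eq_fun do rewrite -mulrBr -mulrA.
exact: cvgMr.
Qed.

Lemma HD0_opp  f q : HD0 f q -> HD0 (fun t => - f t) (- q).
Proof.
move=> hf; apply: (@HD0_ext _ (fun t => (-1) * f t)).
  by move=> t; rewrite mulN1r.
by rewrite -[-q]mulN1r; apply: HD0_scale.
Qed.

Lemma HD0_mul f g q s : HD0 f q -> HD0 g s ->
  HD0 (fun t => f t * g t) (q * g 0 + f 0 * s).
Proof.
move=> hf hg; rewrite /HD0.
have E : forall t, (f t * g t - f 0 * g 0) / t =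
   (f t - f 0) / t * g t + f 0 * ((g t - g 0) / t).
  by move=> t; ring.
under eq_fun do rewrite E.
apply: cvgD; last exact: cvgMr.
apply: cvgM => //; exact: HD0_cont hg.
Qed.

Lemma HD0_sum_seq (I : Type) (r : seq I) (f : I -> R -> R) (q : I -> R) :
  (forall i, HD0 (f i) (q i)) ->
  HD0 (fun t => \sum_(i <- r) f i t) (\sum_(i <- r) q i).
Proof.
move=> h; elim: r => [|x r IH].
  by rewrite big_nil; apply: (@HD0_ext _ (fun _ => 0)) => [t|]; [rewrite big_nil|apply: HD0_cst].
rewrite big_cons; apply: (@HD0_ext _ (fun t => f x t + \sum_(i <- r) f i t)).
  by move=> t; rewrite big_cons.
exact: HD0_add.
Qed.

Lemma HD0_sum (I : finType) (f : I -> R -> R) (q : I -> R) :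
  (forall i, HD0 (f i) (q i)) ->
  HD0 (fun t => \sum_i f i t) (\sum_i q i).
Proof. exact: HD0_sum_seq. Qed.

Definition qq (p q : R) : R :=
  if 0 < p then q else if p < 0 then 0 else Num.max q 0.

Lemma HD0_relu f q : HD0 f q -> HD0 (fun t => Num.max (f t) 0) (qq (f 0) q).
Proof.
move=> hf; have hc := HD0_cont hf; rewrite /qq.
case: ifPn => [p0|]; first last.
rewrite -leNgt => p0; case: ifPn => [pn|].
- rewrite /HD0; apply: cvg_neq (cvg_cst 0); near=> t.
  have : f t < 0 by near: t; apply: cvgr_lt hc _ pn.
  move=> ft; rewrite (max_r (ltW ft)) (max_r (ltW pn)) subrr mul0r //.
- rewrite -leNgt => pg; have p00 : f 0 = 0 by apply/eqP; rewrite eq_le p0 pg.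
  rewrite /HD0.
  have mx : forall x : R, Num.max x 0 = (x + `|x|) / 2.
    move=> x; case: (leP 0 x) => [x0|x0].
      by rewrite (ger0_norm x0) mulrDl -splitr.
    by rewrite (ltr0_norm x0) subrr mul0r.
  rewrite (mx q).
  have L : (fun t => ((f t - f 0) / t + `|(f t - f 0) / t|) / 2) @ (0:R)^'+ --> (q + `|q|) / 2.
    apply: cvgM; last exact: cvg_cst.
    by apply: cvgD; [exact: hf | exact: cvg_norm hf].
  apply: cvg_neq L; near=> t.
  have t0 : 0 < t by near: t; exact: nbhs_right_gt.
  rewrite p00 subr0 maxxx subr0 mx normrM (@gtr0_norm _ t^-1 ltac:(by rewrite invr_gt0)).
  by ring.
rewrite /HD0; apply: cvg_neq hf; near=> t.
have : 0 < f t by near: t; apply: cvgr_gt hc _ p0.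
by move=> ft; rewrite (max_l (ltW ft)) (max_l (ltW p0)).
Unshelve. all: by end_near. Qed.

End HD.
Arguments HD0_ext {R f g q}.
Arguments HD0_cont {R f q}.
Arguments HD0_add {R f g q s}.
Arguments HD0_mul {R f g q s}.
Arguments HD0_opp {R f q}.
Arguments HD0_relu {R f q}.
Arguments HD0_scale {R} c {f q}.

Section M.
Context {R : realType} {N0 N1 N : nat} (X : 'M[R]_(N0, N)) (lam1 lam2 beta : R).
Local Notation V := (var R N0 N1 N).

Definition line (z d : V) (t : R) : V := vadd z (vscale t d).

Lemma line0 (z d : V) : line z d 0 = z.
Proof. by case: z => *; rewrite /line /vadd /vscale /= !scale0r !addr0. Qed.

Lemma dd_HD0 f (z d : V) l : HD0 (fun t => f (line z d t)) l -> is_dirderiv f z d l.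
Proof. by rewrite /HD0 line0. Qed.

Lemma HD0_dd {f} {z d : V} {l} : is_dirderiv f z d l -> HD0 (fun t => f (line z d t)) l.
Proof. by rewrite /HD0 line0. Qed.

Definition argP (y : V) n i := (zW y *m col n X + zb1 y) i ord0.
Definition argF (y : V) n j := ((zW y)^T *m col n (zV y) + zb2 y) j ord0.

Lemma Fobj_E (y : V) : Fobj X y =
  N%:R^-1 * \sum_n \sum_j (Num.max (argF y n j) 0 - X j n) ^+ 2.
Proof.
rewrite /Fobj /sqF; congr (_ * _); apply: eq_bigr => n _; apply: eq_bigr => j _.
by rewrite big_ord1 /argF !mxE.
Qed.

Lemma Pobj_E (y : V) : Pobj X beta y =
  beta * \sum_n \sum_i (zV y i n - Num.max (argP y n i) 0).
Proof.
rewrite /Pobj; congr (_ * _); apply: eq_bigr => n _; apply: eq_bigr => i _.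
by rewrite /argP !mxE.
Qed.

Lemma argP_line z d t n i : argP (line z d t) n i = argP z n i + t * argP d n i.
Proof. rewrite /argP /line /= mulmxDl -scalemxAl !mxE; ring. Qed.

Lemma argF_line z d t n j : argF (line z d t) n j =
  \sum_k ((zW z k j + t * zW d k j) * (zV z k n + t * zV d k n)) + (zb2 z j ord0 + t * zb2 d j ord0).
Proof.
rewrite /argF /line /= !mxE; congr (_ + _); apply: eq_bigr => k _; by rewrite !mxE.
Qed.

Lemma zV_line z d t i n : zV (line z d t) i n = zV z i n + t * zV d i n.
Proof. by rewrite /line /= !mxE. Qed.
Lemma zW_line z d t i j : zW (line z d t) i j = zW z i j + t * zW d i j.
Proof. by rewrite /line /= !mxE. Qed.

Definition dargF (z d : V) n j :=
  \sum_k (zW d k j * zV z k n + zW z k j * zV d k n) + zb2 d j ord0.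

Lemma HD0_eq (f : R -> R) (q q' : R) : HD0 f q -> q = q' -> HD0 f q'.
Proof. by move=> h <-. Qed.

Lemma HD_argF z d n j : HD0 (fun t => argF (line z d t) n j) (dargF z d n j).
Proof.
apply: (HD0_ext (fun t => argF_line z d t n j)).
apply: HD0_eq.
  apply: HD0_add; last exact: HD0_lin.
  apply: HD0_sum => k; apply: HD0_mul; exact: HD0_lin.
by rewrite /dargF; congr (_ + _); apply: eq_bigr => k _; rewrite !mul0r !addr0.
Qed.

Lemma HD_F z d : exists A, HD0 (fun t => Fobj X (line z d t)) A.
Proof.
eexists; apply: (HD0_ext (fun t => Fobj_E (line z d t))).
apply: HD0_scale; apply: HD0_sum => n; apply: HD0_sum => j.
apply: (HD0_ext (fun t => expr2 _)).
apply: HD0_mul; (apply: HD0_add; [apply: HD0_relu; exact: HD_argF | exact: HD0_cst]).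
Qed.

Definition dP (z d : V) := beta * \sum_n \sum_i (zV d i n - qq (argP z n i) (argP d n i)).

Lemma HD_P z d : HD0 (fun t => Pobj X beta (line z d t)) (dP z d).
Proof.
apply: (HD0_ext (fun t => Pobj_E (line z d t))).
apply: HD0_eq.
  apply: HD0_scale; apply: HD0_sum => n; apply: HD0_sum => i.
  apply: (HD0_ext (fun t => congr2 (fun a b => a - Num.max b 0) (zV_line z d t i n) (argP_line z d t n i))).
  apply: HD0_add; first exact: HD0_lin.
  apply: HD0_opp; apply: HD0_relu; exact: HD0_lin.
by rewrite /dP; congr (_ * _); apply: eq_bigr => n _; apply: eq_bigr => i _; rewrite mul0r addr0.
Qed.

Lemma HD_R z d : HD0 (fun t => Robj lam1 lam2 (line z d t)) (gradR_dot lam1 lam2 z d).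
Proof.
have E : forall t, Robj lam1 lam2 (line z d t) =
  lam1 * \sum_n \sum_i (zV z i n + t * zV d i n) +
  lam2 * \sum_i \sum_j ((zW z i j + t * zW d i j) * (zW z i j + t * zW d i j)).
  move=> t; rewrite /Robj /sqF; congr (_ * _ + _ * _);
    apply: eq_bigr => a _; apply: eq_bigr => b _; by rewrite !mxE // expr2.
apply: (HD0_ext E); apply: HD0_eq.
  apply: HD0_add; apply: HD0_scale; apply: HD0_sum => a; apply: HD0_sum => b.
    exact: HD0_lin.
  apply: HD0_mul; exact: HD0_lin.
rewrite /gradR_dot; congr (_ + _ * _).
rewrite mulr_sumr; apply: eq_bigr => a _; rewrite mulr_sumr; apply: eq_bigr => b _.
rewrite !mul0r !addr0; ring.
Qed.

Lemma HD_O z d : exists l, HD0 (fun t => Oobj X lam1 lam2 beta (line z d t)) l.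
Proof.
have [A hA] := HD_F z d.
exists (A + gradR_dot lam1 lam2 z d + dP z d).
apply: HD0_add; last exact: HD_P.
apply: HD0_add => //; exact: HD_R.
Qed.


Lemma sqF_ge0 {m n} (A : 'M[R]_(m, n)) : 0 <= sqF A.
Proof. by apply: sumr_ge0 => i _; apply: sumr_ge0 => j _; apply: sqr_ge0. Qed.

Lemma entry_sq_le {m n} (A : 'M[R]_(m, n)) i j : A i j ^+ 2 <= sqF A.
Proof.
rewrite /sqF (bigD1 i) //= (bigD1 j) //=.
have h1 : 0 <= \sum_(j0 | j0 != j) A i j0 ^+ 2 by apply: sumr_ge0 => *; apply: sqr_ge0.
have h2 : 0 <= \sum_(i0 | i0 != i) \sum_j A i0 j ^+ 2.
  by apply: sumr_ge0 => *; apply: sumr_ge0 => *; apply: sqr_ge0.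
lra.
Qed.

Lemma entry_le {m n} (A : 'M[R]_(m, n)) i j : `|A i j| <= Num.sqrt (sqF A).
Proof. by rewrite -sqrtr_sqr ler_sqrt ?sqF_ge0 ?entry_sq_le. Qed.

Lemma znorm_ge0 (y : V) : 0 <= znorm y.
Proof. exact: sqrtr_ge0. Qed.

Lemma absV (y : V) i n : `|zV y i n| <= znorm y.
Proof.
apply: le_trans (entry_le _ i n) _; rewrite ler_sqrt; last first.
  by rewrite !addr_ge0 ?sqF_ge0.
have := sqF_ge0 (zW y); have := sqF_ge0 (zb1 y); have := sqF_ge0 (zb2 y); lra.
Qed.
Lemma absW (y : V) i n : `|zW y i n| <= znorm y.
Proof.
apply: le_trans (entry_le _ i n) _; rewrite ler_sqrt; last first.
  by rewrite !addr_ge0 ?sqF_ge0.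
have := sqF_ge0 (zV y); have := sqF_ge0 (zb1 y); have := sqF_ge0 (zb2 y); lra.
Qed.
Lemma absb1 (y : V) i n : `|zb1 y i n| <= znorm y.
Proof.
apply: le_trans (entry_le _ i n) _; rewrite ler_sqrt; last first.
  by rewrite !addr_ge0 ?sqF_ge0.
have := sqF_ge0 (zV y); have := sqF_ge0 (zW y); have := sqF_ge0 (zb2 y); lra.
Qed.
Lemma absb2 (y : V) i n : `|zb2 y i n| <= znorm y.
Proof.
apply: le_trans (entry_le _ i n) _; rewrite ler_sqrt; last first.
  by rewrite !addr_ge0 ?sqF_ge0.
have := sqF_ge0 (zV y); have := sqF_ge0 (zb1 y); have := sqF_ge0 (zW y); lra.
Qed.

Lemma sqF_scale {m n} c (A : 'M[R]_(m, n)) : sqF (c *: A) = c ^+ 2 * sqF A.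
Proof.
rewrite /sqF mulr_sumr; apply: eq_bigr => i _; rewrite mulr_sumr; apply: eq_bigr => j _.
by rewrite mxE exprMn.
Qed.

Lemma znorm_scale c (d : V) : znorm (vscale c d) = `|c| * znorm d.
Proof.
rewrite /znorm /= !sqF_scale -!mulrDr sqrtrM ?sqr_ge0 //.
by rewrite sqrtr_sqr.
Qed.

Lemma vsub_line (z d : V) t : vsub (line z d t) z = vscale t d.
Proof.
case: z => *; case: d => *; rewrite /vsub /line /vadd /vscale /=.
by congr Var; rewrite scaleN1r addrC addKr.
Qed.

Lemma vsub_unscale (d : V) t : t != 0 -> vsub (vscale t^-1 (vscale t d)) d = vscale 0 d.
Proof.
move=> t0; case: d => *; rewrite /vsub /vadd /vscale /=.
by congr Var; rewrite scalerA mulVf // scale1r scaleN1r subrr scale0r.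
Qed.

Lemma line_tangent (S : set V) (z d : V) (tau : nat -> R) :
  (forall k, 0 < tau k) -> tau @ \oo --> 0 -> (forall k, S (line z d (tau k))) ->
  tangent_cone S z d.
Proof.
move=> tp tc hS; exists (fun k => line z d (tau k)), tau; do 4 (split => //).
  under eq_fun do rewrite vsub_line znorm_scale.
  rewrite -(mul0r (znorm d)); apply: cvgMl; rewrite -(@normr0 _ R); exact: cvg_norm.
under eq_fun do rewrite vsub_line vsub_unscale ?(lt0r_neq0 (tp _)) // znorm_scale normr0 mul0r.
exact: cvg_cst.
Qed.

Lemma sum2_single (I J : finType) (f : I -> J -> R) i0 j0 :
  (forall i j, (i != i0) || (j != j0) -> f i j = 0) ->
  \sum_i \sum_j f i j = f i0 j0.
Proof.
move=> h; rewrite (bigD1 i0) //=.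
have -> : \sum_(i | i != i0) \sum_j f i j = 0.
  by apply: big1 => i ii; apply: big1 => j _; apply: h; rewrite ii.
rewrite addr0 (bigD1 j0) //=.
have -> : \sum_(j | j != j0) f i0 j = 0.
  by apply: big1 => j jj; apply: h; rewrite jj orbT.
by rewrite addr0.
Qed.

Lemma Omega2_E (y : V) : Omega2 X y <-> forall n i, Num.max (argP y n i) 0 <= zV y i n.
Proof. by rewrite /Omega2; split => h n i; have := h n i; rewrite /argP !mxE. Qed.


Lemma qq0 (p : R) : qq p 0 = 0.
Proof. by rewrite /qq; case: ifP => //; case: ifP => //; rewrite maxxx. Qed.

Lemma sqF0 {m n} : sqF (0 : 'M[R]_(m, n)) = 0.
Proof. by rewrite /sqF big1 // => i _; rewrite big1 // => j _; rewrite mxE expr0n. Qed.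

Lemma lip_HD f (S : set V) L (z d : V) a : lip_const_on f S L -> S z ->
  (\forall t \near (0:R)^'+, S (line z d t)) ->
  HD0 (fun t => f (line z d t)) a -> a <= L * znorm d.
Proof.
move=> [L0 hL] Sz St h; rewrite /HD0 in h.
apply: (cvgr_to_le h).
near=> t.
have t0 : 0 < t by near: t; exact: nbhs_right_gt.
have St' : S (line z d t) by near: t.
rewrite /= line0 ler_pdivrMr //; apply: le_trans (ler_norm _) _.
apply: le_trans (hL _ _ St' Sz) _.
rewrite vsub_line znorm_scale gtr0_norm //.
by have -> : L * znorm d * t = L * (t * znorm d) by ring.
Unshelve. all: by end_near. Qed.

Lemma part1 alpha theta LF LR
 (hLF : lip_const_on (Fobj X) (Omega_theta (N1:=N1) X lam1 lam2 beta theta) LF)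
 (hLR : lip_const_on (Robj lam1 lam2) (Omega_theta (N1:=N1) X lam1 lam2 beta theta) LR)
 (hbetaL : LF + LR < beta) (z : V) (hZ : Zset X alpha z)
 (hO : Oobj X lam1 lam2 beta z < theta)
 (hstat : dstat_on (Oobj X lam1 lam2 beta) (Zset X alpha) z) : Omega1 X z.
Proof.
have [h2 h3] := hZ.
have key : forall n i, zV z i n = Num.max (argP z n i) 0.
  move=> n0 i0; apply/eqP; rewrite eq_le; apply/andP; split; last by move/Omega2_E: h2; apply.
  rewrite leNgt; apply/negP => lt.
  pose g := zV z i0 n0 - Num.max (argP z n0 i0) 0.
  have g0 : 0 < g by rewrite subr_gt0.
  pose dV := \matrix_(i, n) (if (i == i0) && (n == n0) then -1 else 0 : R).
  pose d : V := Var 0 0 0 dV.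
  have argPd : forall n i, argP d n i = 0.
    by move=> n i; rewrite /argP /= mul0mx add0r mxE.
  have Sline : forall t, 0 <= t <= g -> Zset X alpha (line z d t).
    move=> t /andP[t0 tg]; split.
    - apply/Omega2_E => n i; rewrite argP_line argPd mulr0 addr0 zV_line mxE.
      case: ifP => [/andP[/eqP-> /eqP->]|_]; last by rewrite mulr0 addr0; move/Omega2_E: h2; apply.
      rewrite mulrN1; rewrite /g in tg; lra.
    - by rewrite /Omega3 /bnormInf /line /= !scaler0 !addr0; exact: h3.
  pose tau k := g * (@harmonic R k).
  have taup : forall k, 0 < tau k by move=> k; rewrite /tau mulr_gt0 // harmonic_gt0.
  have tc : tangent_cone (Zset X alpha) z d.
    apply: (@line_tangent _ _ _ tau) => //.
      rewrite -(mulr0 g); apply: cvgMr; exact: cvg_harmonic.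
    move=> k; apply: Sline; rewrite ltW //= ger_pMr // invf_le1 // ler1n //.
  have [a hA] := HD_F z d.
  have hR := HD_R z d.
  have hP := HD_P z d.
  have hOd := HD0_add (HD0_add hA hR) hP.
  have := hstat.2 d tc _ (@dd_HD0 (Oobj X lam1 lam2 beta) z d _ hOd).
  have dPv : dP z d = - beta.
    rewrite /dP.
    have -> : \sum_n \sum_i (zV d i n - qq (argP z n i) (argP d n i)) = \sum_n \sum_i zV d i n.
      by apply: eq_bigr => n _; apply: eq_bigr => i _; rewrite argPd qq0 subr0.
    rewrite (@sum2_single _ _ _ n0 i0); first by rewrite /= mxE !eqxx mulrN1.
    move=> n i; rewrite /= mxE => /orP[nn|ii]; first by rewrite (negbTE nn) andbF.
    by rewrite (negbTE ii).
  have nd : znorm d = 1.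
    rewrite /znorm /= !sqF0 !add0r.
    rewrite /sqF (@sum2_single _ _ _ i0 n0); first by rewrite mxE !eqxx sqrrN expr1n sqrtr1.
    move=> i n; rewrite mxE => /orP[ii|nn]; first by rewrite (negbTE ii) expr0n.
    by rewrite (negbTE nn) andbF expr0n.
  have hOc := HD0_cont hOd; rewrite /= line0 in hOc.
  have Onear : \forall t \near (0:R)^'+, Oobj X lam1 lam2 beta (line z d t) < theta.
    exact: (cvgr_lt _ hOc _ hO).
  have Snear : \forall t \near (0:R)^'+, Omega_theta (N1:=N1) X lam1 lam2 beta theta (line z d t).
    near=> t; split.
      have tg : 0 <= t <= g.
        rewrite ltW /=; last by near: t; exact: nbhs_right_gt.
        by apply: ltW; near: t; exact: nbhs_right_lt.
      exact: (Sline t tg).1.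
    by apply: ltW; near: t; exact: Onear.
  have Sz : Omega_theta (N1:=N1) X lam1 lam2 beta theta z by split => //; exact: ltW.
  have aL := @lip_HD _ _ _ _ _ _ hLF Sz Snear hA.
  have bL := @lip_HD _ _ _ _ _ _ hLR Sz Snear hR.
  rewrite nd !mulr1 in aL bL; rewrite dPv; lra.
move=> n; apply/matrixP => i j; rewrite (ord1 j).
by rewrite !mxE key /argP !mxE.
Unshelve. all: by end_near. Qed.


Lemma sum_bound (I : finType) (a b : I -> R) e : (forall i, `|a i| <= e) ->
  `|\sum_i a i * b i| <= e * \sum_i `|b i|.
Proof.
move=> h; apply: le_trans (ler_norm_sum _ _ _) _; rewrite mulr_sumr.
apply: ler_sum => i _; rewrite normrM; apply: ler_wpM2r => //.
Qed.

Lemma relu_lip (x y : R) : `|Num.max x 0 - Num.max y 0| <= `|x - y|.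
Proof.
have h1 := ler_norm (x - y).
have h2 : y - x <= `|x - y| by rewrite distrC ler_norm.
rewrite ler_norml; case: (leP 0 x) => hx; case: (leP 0 y) => hy; apply/andP; split; lra.
Qed.

Lemma argP_add (y y' : V) n i : argP (vadd y y') n i = argP y n i + argP y' n i.
Proof. rewrite /argP /= mulmxDl !mxE; ring. Qed.
Lemma argP_scale c (y : V) n i : argP (vscale c y) n i = c * argP y n i.
Proof. rewrite /argP /= -scalemxAl !mxE; ring. Qed.
Lemma argP_vsub (y z : V) n i : argP (vsub y z) n i = argP y n i - argP z n i.
Proof. rewrite /vsub argP_add argP_scale; ring. Qed.
Lemma zV_vsub (y z : V) i n : zV (vsub y z) i n = zV y i n - zV z i n.
Proof. rewrite /vsub /= !mxE; ring. Qed.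
Lemma zV_scale c (y : V) i n : zV (vscale c y) i n = c * zV y i n.
Proof. by rewrite /= !mxE. Qed.

Lemma colsum_le n : \sum_m `|X m n| <= norm1 X.
Proof. rewrite /norm1; exact: le_bigmax. Qed.

Lemma argP_bound (y : V) n i e : (forall m, `|zW y i m| <= e) -> `|zb1 y i ord0| <= e ->
  `|argP y n i| <= e * (norm1 X + 1).
Proof.
move=> hW hb; have e0 : 0 <= e by apply: le_trans hb.
have -> : argP y n i = \sum_m zW y i m * X m n + zb1 y i ord0.
  by rewrite /argP !mxE; congr (_ + _); apply: eq_bigr => m _; rewrite !mxE.
apply: le_trans (ler_normD _ _) _.
have := @sum_bound _ _ (fun m => X m n) _ hW.
have := colsum_le n.
rewrite mulrDr mulr1 => hc hs.
have : e * \sum_m `|X m n| <= e * norm1 X by apply: ler_wpM2l.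
lra.
Qed.

Lemma Omega1_E {y : V} : Omega1 X y -> forall n i, zV y i n = Num.max (argP y n i) 0.
Proof. by move=> h n i; have := congr1 (fun M : 'M[R]_(N1,1) => M i ord0) (h n); rewrite /argP !mxE. Qed.

Lemma Omega12 : Omega1 (N1:=N1) X `<=` Omega2 X.
Proof. by move=> y h; apply/Omega2_E => n i; rewrite (Omega1_E h). Qed.

Lemma tc_mono {S S' : set V} {z d} : S `<=` S' -> tangent_cone S z d -> tangent_cone S' z d.
Proof. by move=> sub [y [tau [Sy rest]]]; exists y, tau; split => // k; apply: sub. Qed.

Lemma part3 (z : V) (h1 : Omega1 X z)
  (h2 : dstat_on (Oobj X lam1 lam2 beta) (Omega2 X) z) : dstat_R X lam1 lam2 z.
Proof.
split => // d tc l hl.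
have hO := HD0_add (HD0_add (HD0_dd hl) (HD_R z d)) (HD_P z d).
have := h2.2 d (tc_mono Omega12 tc) _ (@dd_HD0 (Oobj X lam1 lam2 beta) z d _ hO).
suff -> : dP z d = 0 by rewrite addr0.
rewrite /dP big1 ?mulr0 // => n _; rewrite big1 // => i _; apply/eqP; rewrite subr_eq0; apply/eqP.
case: tc => y [tau [Sy [tp [tc0 [yc uc]]]]].
set a := argP z n i; set c := argP d n i.
pose u k := vscale (tau k)^-1 (vsub (y k) z).
pose e k := znorm (vsub (u k) d).
have ec : e @ \oo --> 0 := uc.
pose g t := (Num.max (a + t * c) 0 - Num.max a 0) / t.
have gq : g t @[t --> (0:R)^'+] --> qq a c.
  by have := HD0_relu (HD0_lin a c); rewrite /HD0 /= mul0r addr0.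
have gs := (cvg_at_rightP g 0 (qq a c)).1 gq tau (conj tp tc0).
have bound : forall k, `|zV d i n - qq a c| <= e k + e k * (norm1 X + 1) + `|g (tau k) - qq a c|.
  move=> k.
  have t0 : tau k != 0 by apply: lt0r_neq0.
  have E1 : `|zV (u k) i n - zV d i n| <= e k by rewrite -zV_vsub; apply: absV.
  have E2 : `|argP (u k) n i - c| <= e k * (norm1 X + 1).
    rewrite -argP_vsub; apply: argP_bound => [m|]; [exact: absW | exact: absb1].
  have Ey : argP (y k) n i = a + tau k * argP (u k) n i.
    by rewrite /u argP_scale argP_vsub mulrA divff // mul1r addrC subrK.
  have E3 : zV (u k) i n - g (tau k) =
      (Num.max (a + tau k * argP (u k) n i) 0 - Num.max (a + tau k * c) 0) / tau k.
    rewrite /u zV_scale zV_vsub (Omega1_E (Sy k)) (Omega1_E h1) Ey /g -/a; ring.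
  have E4 : `|zV (u k) i n - g (tau k)| <= `|argP (u k) n i - c|.
    rewrite E3 normrM normfV ler_pdivrMr ?normr_gt0 //.
    apply: le_trans (relu_lip _ _) _.
    have -> : a + tau k * argP (u k) n i - (a + tau k * c) = tau k * (argP (u k) n i - c) by ring.
    by rewrite normrM mulrC.
  have T : zV d i n - qq a c = - (zV (u k) i n - zV d i n) + (zV (u k) i n - g (tau k)) + (g (tau k) - qq a c) by ring.
  rewrite T; apply: le_trans (ler_normD _ _) _; apply: lerD => //.
  apply: le_trans (ler_normD _ _) _; rewrite normrN; apply: lerD => //.
  exact: le_trans E4 E2.
have sc : (fun k => e k + e k * (norm1 X + 1) + `|g (tau k) - qq a c|) @ \oo --> 0.
  have L : (fun k => e k + e k * (norm1 X + 1) + `|g (tau k) - qq a c|) @ \oo -->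
     (0 + 0 * (norm1 X + 1) + `|qq a c - qq a c| : R).
    apply: cvgD; first by apply: cvgD; [exact: ec | exact: cvgMl].
    by apply: cvg_norm; apply: cvgB => //; exact: cvg_cst.
  by rewrite mul0r subrr normr0 !addr0 in L.
have : `|zV d i n - qq a c| <= 0.
  apply: (cvgr_to_ge sc); near=> k; exact: bound.
by rewrite normr_le0 subr_eq0 => /eqP.
Unshelve. all: by end_near. Qed.


Lemma le_sum1 {I : finType} (f : I -> R) a : (forall i, 0 <= f i) -> f a <= \sum_i f i.
Proof.
move=> h; rewrite (bigD1 a) //=; rewrite lerDl; apply: sumr_ge0 => *; exact: h.
Qed.

Lemma le_sum2 {I J : finType} (f : I -> J -> R) a b : (forall i j, 0 <= f i j) ->
  f a b <= \sum_i \sum_j f i j.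
Proof.
move=> h; apply: le_trans (le_sum1 (f a) b (h a)) _.
apply: (le_sum1 (fun i => \sum_j f i j)) => i; apply: sumr_ge0 => *; exact: h.
Qed.

Lemma lt_abs_of {b al : R} : `|b| <= al -> b != al -> b != - al -> `|b| < al.
Proof.
move=> h n1 n2; rewrite ltr_norml; move: h; rewrite ler_norml => /andP[h1 h2].
have h1' : b < al by rewrite lt_neqAle n1 h2.
have h2' : - al < b by rewrite lt_neqAle eq_sym n2 h1.
by rewrite h1' h2'.
Qed.

Lemma alpha_facts theta (hN0 : (0 < N0)%N) (hN1 : (0 < N1)%N) (hN : (0 < N)%N)
  (hlam1 : 0 < lam1) (hlam2 : 0 < lam2) (hbeta : 0 < beta)
  (htheta : N%:R^-1 * normF X ^+ 2 < theta) (z : V)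
  (h2 : Omega2 X z) (h3 : Omega3 (alpha_of N1 X lam1 lam2 theta) z)
  (hO : Oobj X lam1 lam2 beta z < theta) :
  let al := alpha_of N1 X lam1 lam2 theta in
  [/\ (forall i, zb1 z i ord0 = - al -> forall n, argP z n i < 0),
      (forall i, zb1 z i ord0 != - al -> `|zb1 z i ord0| < al),
      (forall j, zb2 z j ord0 = - al -> forall n, argF z n j < 0) &
      (forall j, zb2 z j ord0 != - al -> `|zb2 z j ord0| < al)].
Proof.
move=> al.
have th0 : 0 < theta.
  apply: le_lt_trans htheta; apply: mulr_ge0; [by rewrite invr_ge0 ler0n | exact: sqr_ge0].
have Vnn : forall i n, 0 <= zV z i n.
  move=> i n; move/Omega2_E: h2 => /(_ n i) h; apply: (le_trans _ h); by rewrite le_max lexx orbT.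
have Fnn : 0 <= Fobj X z.
  rewrite Fobj_E; apply: mulr_ge0; first by rewrite invr_ge0 ler0n.
  by apply: sumr_ge0 => *; apply: sumr_ge0 => *; apply: sqr_ge0.
have Pnn : 0 <= Pobj X beta z.
  rewrite Pobj_E; apply: mulr_ge0; first exact: ltW.
  apply: sumr_ge0 => n _; apply: sumr_ge0 => i _; rewrite subr_ge0.
  by move/Omega2_E: h2; apply.
pose S := \sum_n \sum_i zV z i n.
pose Q := sqF (zW z).
have S0 : 0 <= S by apply: sumr_ge0 => *; apply: sumr_ge0 => *; exact: Vnn.
have Q0 : 0 <= Q := sqF_ge0 _.
have RS : lam1 * S + lam2 * Q < theta.
  have : Robj lam1 lam2 z < theta by move: hO; rewrite /Oobj; lra.
  by rewrite /Robj.
have lS : lam1 * S < theta.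
  have : 0 <= lam2 * Q by apply: mulr_ge0 => //; exact: ltW.
  lra.
have lQ : lam2 * Q < theta.
  have : 0 <= lam1 * S by apply: mulr_ge0 => //; exact: ltW.
  lra.
pose w := Num.sqrt Q.
have w0 : 0 <= w := sqrtr_ge0 _.
have Ww : forall i j, `|zW z i j| <= w by move=> i j; exact: entry_le.
have NN : 1 <= (N1 * N0)%:R :> R.
  by rewrite ler1n muln_gt0 hN0 hN1.
pose s1 := Num.sqrt ((N1 * N0)%:R * theta / lam2).
have ws1 : w <= s1.
  rewrite ler_sqrt; last by apply: divr_ge0; [apply: mulr_ge0 => //; exact: ltW | exact: ltW].
  rewrite ler_pdivlMr //.
  have : theta <= (N1 * N0)%:R * theta by rewrite ler_peMl // ltW.
  rewrite mulrC; lra.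
pose T2 := theta * Num.sqrt ((N1 * N0)%:R * theta) / (lam1 * Num.sqrt lam2).
have sl2 : 0 < Num.sqrt lam2 by rewrite sqrtr_gt0.
have wS : w * S <= T2.
  have w2 : w <= Num.sqrt ((N1 * N0)%:R * theta) / Num.sqrt lam2.
    rewrite ler_pdivlMr // -sqrtrM ?sqF_ge0 // ler_sqrt; last by apply: mulr_ge0 => //; exact: ltW.
    have : theta <= (N1 * N0)%:R * theta by rewrite ler_peMl // ltW.
    rewrite mulrC in lQ; lra.
  have S2 : S <= theta / lam1 by rewrite ler_pdivlMr // mulrC ltW.
  have -> : T2 = theta / lam1 * (Num.sqrt ((N1 * N0)%:R * theta) / Num.sqrt lam2).
    by rewrite /T2; field; rewrite ?lt0r_neq0.
  by rewrite mulrC; apply: ler_pM.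
pose nX := norm1 X.
have n0 : 'I_N := Ordinal hN.
have nX0 : 0 <= nX.
  apply: le_trans (colsum_le n0); apply: sumr_ge0 => *; exact: normr_ge0.
have A1 : theta / lam1 + s1 * nX <= al by rewrite /al /alpha_of le_max lexx.
have A2 : T2 + Num.sqrt (N%:R * theta) + nX <= al by rewrite /al /alpha_of le_max lexx orbT.
have sN : 0 < Num.sqrt (N%:R * theta) by rewrite sqrtr_gt0 mulr_gt0 // ltr0n.
have tl : 0 < theta / lam1 by rewrite divr_gt0.
have bnd1 : forall i, `|zb1 z i ord0| <= al.
  move=> i; apply: le_trans h3; rewrite /bnormInf le_max; apply/orP; left.
  rewrite /normInf; apply: le_trans (le_bigmax _ _ i); exact: (le_bigmax _ (fun j => `|zb1 z i j|) ord0).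
have bnd2 : forall i, `|zb2 z i ord0| <= al.
  move=> i; apply: le_trans h3; rewrite /bnormInf le_max; apply/orP; right.
  rewrite /normInf; apply: le_trans (le_bigmax _ _ i); exact: (le_bigmax _ (fun j => `|zb2 z i j|) ord0).
have WX : forall n i, `|\sum_m zW z i m * X m n| <= s1 * nX.
  move=> n i; apply: le_trans (@sum_bound _ _ (fun m => X m n) _ (Ww i)) _.
  apply: ler_pM => //; [exact: sumr_ge0 | exact: colsum_le].
have argPE : forall n i, argP z n i = \sum_m zW z i m * X m n + zb1 z i ord0.
  by move=> n i; rewrite /argP !mxE; congr (_ + _); apply: eq_bigr => m _; rewrite !mxE.
have WV : forall n j, `|\sum_k zW z k j * zV z k n| <= T2.
  move=> n j; apply: le_trans (@sum_bound _ (fun k => zW z k j) (fun k => zV z k n) _ (fun k => Ww k j)) _.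
  apply: le_trans wS; apply: ler_wpM2l => //.
  have -> : \sum_k `|zV z k n| = \sum_k zV z k n by apply: eq_bigr => k _; rewrite ger0_norm.
  rewrite /S; apply: (le_sum1 (fun n => \sum_k zV z k n)) => n'; apply: sumr_ge0 => *; exact: Vnn.
have argFE : forall n j, argF z n j = \sum_k zW z k j * zV z k n + zb2 z j ord0.
  by move=> n j; rewrite /argF !mxE; congr (_ + _); apply: eq_bigr => k _; rewrite !mxE.
have Rnn : 0 <= Robj lam1 lam2 z.
  by rewrite /Robj; apply: addr_ge0; apply: mulr_ge0 => //; apply: ltW.
have FO : Fobj X z < theta by move: hO; rewrite /Oobj; lra.
split.
- move=> i hb n; rewrite argPE hb; have := WX n i; rewrite ler_norml => /andP[_ h]; lra.
- move=> i hb.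
  apply: (lt_abs_of (bnd1 i) _ hb).
  apply/negP => /eqP hb'.
  have hV := Omega2_E z; move/hV: h2 => /(_ n0 i) hV2.
  have : theta / lam1 <= argP z n0 i.
    rewrite argPE hb'; have := WX n0 i; rewrite ler_norml => /andP[h _]; lra.
  have : argP z n0 i <= Num.max (argP z n0 i) 0 by rewrite le_max lexx.
  have VS : zV z i n0 <= S by apply: (le_sum2 (fun n i => zV z i n)) => *; exact: Vnn.
  move=> h1 h3'; have : theta / lam1 <= S by lra.
  move=> /(ler_wpM2l (ltW hlam1)); rewrite [lam1 * (_ / _)]mulrC divfK ?lt0r_neq0 //.
  lra.
- move=> j hb n; rewrite argFE hb; have := WV n j; rewrite ler_norml => /andP[_ h]; lra.
- move=> j hb; apply: (lt_abs_of (bnd2 j) _ hb).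
  apply/negP => /eqP hb'.
  have hF : Num.sqrt (N%:R * theta) + nX <= argF z n0 j.
    rewrite argFE hb'; have := WV n0 j; rewrite ler_norml => /andP[h _]; lra.
  have hX : X j n0 <= nX.
    apply: le_trans (ler_norm _) _; apply: le_trans (colsum_le n0).
    exact: (le_sum1 (fun m => `|X m n0|)).
  have ht : Num.sqrt (N%:R * theta) <= Num.max (argF z n0 j) 0 - X j n0.
    have : argF z n0 j <= Num.max (argF z n0 j) 0 by rewrite le_max lexx.
    lra.
  have ht2 : N%:R * theta <= (Num.max (argF z n0 j) 0 - X j n0) ^+ 2.
    rewrite -[X in X <= _]sqr_sqrtr; last by apply: mulr_ge0 => //; exact: ltW.
    by rewrite !expr2; apply: ler_pM => //; exact: ltW.
  have hs : (Num.max (argF z n0 j) 0 - X j n0) ^+ 2 <=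
      \sum_n \sum_j (Num.max (argF z n j) 0 - X j n) ^+ 2.
    by apply: (le_sum2 (fun n j => (Num.max (argF z n j) 0 - X j n) ^+ 2)) => *; exact: sqr_ge0.
  have : theta <= Fobj X z.
    rewrite Fobj_E; apply: le_trans (ler_wpM2l _ (le_trans ht2 hs)); last by rewrite invr_ge0 ler0n.
    by rewrite mulrA mulVf ?mul1r // pnatr_eq0 -lt0n.
  lra.
Qed.


Lemma near_lt0 {f : R -> R} {q} : HD0 f q -> f 0 < 0 -> \forall t \near (0:R)^'+, f t < 0.
Proof. by move=> h h0; exact: (cvgr_lt _ (HD0_cont h) _ h0). Qed.

Lemma Oobj_congr (y y' : V) : zW y = zW y' -> zV y = zV y' ->
  (forall n i, Num.max (argP y n i) 0 = Num.max (argP y' n i) 0) ->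
  (forall n j, Num.max (argF y n j) 0 = Num.max (argF y' n j) 0) ->
  Oobj X lam1 lam2 beta y = Oobj X lam1 lam2 beta y'.
Proof.
move=> hW hV hP hF; rewrite /Oobj (Fobj_E y) (Fobj_E y') (Pobj_E y) (Pobj_E y') /Robj hW hV.
congr (_ * _ + _ + _ * _).
- by apply: eq_bigr => n _; apply: eq_bigr => j _; rewrite hF.
- by apply: eq_bigr => n _; apply: eq_bigr => i _; rewrite hP.
Qed.

Lemma sqF_mono_cV {m} {A B : 'cV[R]_m} : (forall i, A i ord0 = B i ord0 \/ A i ord0 = 0) ->
  sqF A <= sqF B.
Proof.
move=> h; apply: ler_sum => i _; apply: ler_sum => j _; rewrite (ord1 j).
by case: (h i) => ->; [exact: lexx | rewrite expr0n /=; exact: sqr_ge0].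
Qed.

Lemma znorm_mono (u u' : V) : zW u = zW u' -> zV u = zV u' ->
  (forall i, zb1 u i ord0 = zb1 u' i ord0 \/ zb1 u i ord0 = 0) ->
  (forall j, zb2 u j ord0 = zb2 u' j ord0 \/ zb2 u j ord0 = 0) -> znorm u <= znorm u'.
Proof.
move=> hW hV h1 h2; rewrite /znorm hW hV ler_sqrt; last by rewrite !addr_ge0 ?sqF_ge0.
have := sqF_mono_cV h1; have := sqF_mono_cV h2; lra.
Qed.

Lemma bnd1_of al (y : V) i : Omega3 al y -> `|zb1 y i ord0| <= al.
Proof.
move=> h3; apply: le_trans h3; rewrite /bnormInf le_max; apply/orP; left.
rewrite /normInf; apply: le_trans (le_bigmax _ _ i); exact: (le_bigmax _ (fun j => `|zb1 y i j|) ord0).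
Qed.
Lemma bnd2_of al (y : V) i : Omega3 al y -> `|zb2 y i ord0| <= al.
Proof.
move=> h3; apply: le_trans h3; rewrite /bnormInf le_max; apply/orP; right.
rewrite /normInf; apply: le_trans (le_bigmax _ _ i); exact: (le_bigmax _ (fun j => `|zb2 y i j|) ord0).
Qed.

Lemma shift_cvg (u : nat -> R) (K : nat) (l : R) : u @ \oo --> l -> (fun k => u (k + K)%N) @ \oo --> l.
Proof. by move=> h; rewrite (cvg_shiftn K). Qed.
Lemma ev_K {P : nat -> Prop} : (\forall k \near \oo, P k) -> exists K, forall k, (K <= k)%N -> P k.
Proof. by case=> K _ HK; exists K => k hk; apply: HK. Qed.


Lemma part2 theta (hN0 : (0 < N0)%N) (hN1 : (0 < N1)%N) (hN : (0 < N)%N)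
  (hlam1 : 0 < lam1) (hlam2 : 0 < lam2) (hbeta : 0 < beta)
  (htheta : N%:R^-1 * normF X ^+ 2 < theta) (z : V)
  (hZ : Zset X (alpha_of N1 X lam1 lam2 theta) z)
  (hO : Oobj X lam1 lam2 beta z < theta)
  (hstat : dstat_on (Oobj X lam1 lam2 beta) (Zset X (alpha_of N1 X lam1 lam2 theta)) z) :
  dstat_on (Oobj X lam1 lam2 beta) (Omega2 X) z.
Proof.
have [h2 h3] := hZ.
move: (alpha_facts theta hN0 hN1 hN hlam1 hlam2 hbeta htheta z h2 h3 hO) => /= [F1 F2 F3 F4].
move: hstat h3 F1 F2 F3 F4; set al := alpha_of N1 X lam1 lam2 theta => hstat h3 F1 F2 F3 F4.
have al0 : 0 <= al := le_trans (normr_ge0 _) (bnd1_of _ _ (Ordinal hN1) h3).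
split => // d tc l hl.
pose act1 i := zb1 z i ord0 == - al.
pose act2 j := zb2 z j ord0 == - al.
pose d' : V := Var (zW d) (\col_i (if act1 i then 0 else zb1 d i ord0))
  (\col_j (if act2 j then 0 else zb2 d j ord0)) (zV d).
apply: (hstat.2 d'); last first.
  have hP : forall n i, \forall t \near (0:R)^'+,
      Num.max (argP (line z d' t) n i) 0 = Num.max (argP (line z d t) n i) 0.
    move=> n i; case: (boolP (act1 i)) => a.
    - have n1 := near_lt0 (HD0_lin (argP z n i) (argP d' n i)).
      have n2 := near_lt0 (HD0_lin (argP z n i) (argP d n i)).
      rewrite /= mul0r addr0 in n1; rewrite /= mul0r addr0 in n2.
      have := n1 (F1 i (eqP a) n); have := n2 (F1 i (eqP a) n) => m2 m1.
      near=> t.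
      have e1 : argP z n i + t * argP d' n i < 0 by near: t; exact: m1.
      have e2 : argP z n i + t * argP d n i < 0 by near: t; exact: m2.
      by rewrite !argP_line (max_r (ltW e1)) (max_r (ltW e2)).
    - near=> t; rewrite !argP_line.
      have -> : argP d' n i = argP d n i by rewrite /argP /= !mxE (negbTE a).
      by [].
  have hF : forall n j, \forall t \near (0:R)^'+,
      Num.max (argF (line z d' t) n j) 0 = Num.max (argF (line z d t) n j) 0.
    move=> n j; case: (boolP (act2 j)) => a.
    - have n1 := near_lt0 (HD_argF z d' n j).
      have n2 := near_lt0 (HD_argF z d n j).
      rewrite /= !line0 in n1 n2.
      have := n1 (F3 j (eqP a) n); have := n2 (F3 j (eqP a) n) => m2 m1.
      near=> t.
      have e1 : argF (line z d' t) n j < 0 by near: t; exact: m1.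
      have e2 : argF (line z d t) n j < 0 by near: t; exact: m2.
      by rewrite (max_r (ltW e1)) (max_r (ltW e2)).
    - near=> t.
      have e2 : zb2 d' j ord0 = zb2 d j ord0 by rewrite /= mxE (negbTE a).
      by rewrite !argF_line e2.
  have hP' : \forall t \near (0:R)^'+, forall n i,
      Num.max (argP (line z d' t) n i) 0 = Num.max (argP (line z d t) n i) 0.
    by apply: filter_forall => n; apply: filter_forall => i; exact: hP.
  have hF' : \forall t \near (0:R)^'+, forall n j,
      Num.max (argF (line z d' t) n j) 0 = Num.max (argF (line z d t) n j) 0.
    by apply: filter_forall => n; apply: filter_forall => j; exact: hF.
  rewrite /is_dirderiv; apply: cvg_neq hl.
  near=> t.
  have p1 : forall n i, Num.max (argP (line z d' t) n i) 0 = Num.max (argP (line z d t) n i) 0.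
    by near: t; exact: hP'.
  have p2 : forall n j, Num.max (argF (line z d' t) n j) 0 = Num.max (argF (line z d t) n j) 0.
    by near: t; exact: hF'.
  have := Oobj_congr (line z d' t) (line z d t) erefl erefl p1 p2.
  by rewrite /line => ->.
case: tc => y [tau [Sy [tp [tc0 [yc uc]]]]].
pose y' k : V := Var (zW (y k)) (\col_i (if act1 i then zb1 z i ord0 else zb1 (y k) i ord0))
  (\col_j (if act2 j then zb2 z j ord0 else zb2 (y k) j ord0)) (zV (y k)).
pose e k := znorm (vsub (y k) z).
have ec : e @ \oo --> 0 := yc.
have EP : forall n i, \forall k \near \oo, Num.max (argP (y' k) n i) 0 <= zV (y k) i n.
  move=> n i.
  have Vk : forall k, 0 <= zV (y k) i n.
    move=> k; move/Omega2_E: (Sy k) => /(_ n i) h; apply: (le_trans _ h).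
    by rewrite le_max lexx orbT.
  case: (boolP (act1 i)) => a.
  - have neg := F1 i (eqP a) n.
    have bnd : forall k, argP (y' k) n i <= argP z n i + e k * (norm1 X + 1).
      move=> k.
      have hw : forall m, `|zW (vsub (y' k) z) i m| <= e k.
        by move=> m; exact: (absW (vsub (y k) z) i m).
      have hb : `|zb1 (vsub (y' k) z) i ord0| <= e k.
        by rewrite /= !mxE a mulN1r subrr normr0; exact: znorm_ge0.
      have := @argP_bound (vsub (y' k) z) n i (e k) hw hb.
      by rewrite argP_vsub ler_norml => /andP[_ h]; lra.
    have L : (fun k => e k * (norm1 X + 1)) @ \oo --> (0 * (norm1 X + 1) : R) by apply: cvgMl.
    rewrite mul0r in L.
    have ev := cvgr_lt _ L (- argP z n i) (ltac:(by rewrite oppr_gt0)).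
    near=> k.
    have hk : e k * (norm1 X + 1) < - argP z n i by near: k; exact: ev.
    have ng : argP (y' k) n i < 0 by have := bnd k; lra.
    by rewrite (max_r (ltW ng)); exact: Vk.
  - near=> k.
    have -> : argP (y' k) n i = argP (y k) n i by rewrite /argP !mxE /= (negbTE a).
    by move/Omega2_E: (Sy k); apply.
have EB1 : forall i, \forall k \near \oo,
    `|(if act1 i then zb1 z i ord0 else zb1 (y k) i ord0)| <= al.
  move=> i; case: (boolP (act1 i)) => a.
  - by near=> k; rewrite (eqP a) normrN ger0_norm.
  - have lt := F2 i a.
    have ev := cvgr_lt _ ec (al - `|zb1 z i ord0|) (ltac:(by rewrite subr_gt0)).
    near=> k.
    have hk : e k < al - `|zb1 z i ord0| by near: k; exact: ev.
    have h1 : `|zb1 (y k) i ord0 - zb1 z i ord0| <= e k.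
      by have := absb1 (vsub (y k) z) i ord0; rewrite /= !mxE mulN1r.
    have tri : `|zb1 (y k) i ord0| <= `|zb1 z i ord0| + `|zb1 (y k) i ord0 - zb1 z i ord0|.
      by apply: le_trans (ler_normD _ _); rewrite addrC subrK.
    lra.
have EB2 : forall j, \forall k \near \oo,
    `|(if act2 j then zb2 z j ord0 else zb2 (y k) j ord0)| <= al.
  move=> j; case: (boolP (act2 j)) => a.
  - by near=> k; rewrite (eqP a) normrN ger0_norm.
  - have lt := F4 j a.
    have ev := cvgr_lt _ ec (al - `|zb2 z j ord0|) (ltac:(by rewrite subr_gt0)).
    near=> k.
    have hk : e k < al - `|zb2 z j ord0| by near: k; exact: ev.
    have h1 : `|zb2 (y k) j ord0 - zb2 z j ord0| <= e k.
      by have := absb2 (vsub (y k) z) j ord0; rewrite /= !mxE mulN1r.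
    have tri : `|zb2 (y k) j ord0| <= `|zb2 z j ord0| + `|zb2 (y k) j ord0 - zb2 z j ord0|.
      by apply: le_trans (ler_normD _ _); rewrite addrC subrK.
    lra.
have EP' : \forall k \near \oo, forall n i, Num.max (argP (y' k) n i) 0 <= zV (y k) i n.
  by apply: filter_forall => n; apply: filter_forall => i; exact: EP.
have EB1' : \forall k \near \oo, forall i,
    `|(if act1 i then zb1 z i ord0 else zb1 (y k) i ord0)| <= al.
  by apply: filter_forall => i; exact: EB1.
have EB2' : \forall k \near \oo, forall j,
    `|(if act2 j then zb2 z j ord0 else zb2 (y k) j ord0)| <= al.
  by apply: filter_forall => j; exact: EB2.
have Ev : \forall k \near \oo, Zset X al (y' k).
  near=> k.
  have hP : forall n i, Num.max (argP (y' k) n i) 0 <= zV (y k) i n by near: k; exact: EP'.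
  have hb1 : forall i, `|(if act1 i then zb1 z i ord0 else zb1 (y k) i ord0)| <= al.
    by near: k; exact: EB1'.
  have hb2 : forall j, `|(if act2 j then zb2 z j ord0 else zb2 (y k) j ord0)| <= al.
    by near: k; exact: EB2'.
  split; first by apply/Omega2_E => n i; exact: hP.
  rewrite /Omega3 /bnormInf /= ge_max; apply/andP; split;
    apply: bigmax_le => // i _; apply: bigmax_le => // j _; rewrite (ord1 j) mxE;
    [exact: hb1 | exact: hb2].
have [K HK] := ev_K Ev.
exists (fun k => y' (k + K)%N), (fun k => tau (k + K)%N).
split; first by move=> k; apply: HK; exact: leq_addl.
split; first by move=> k; exact: tp.
split; first exact: shift_cvg.
split.
  apply: (@squeeze_cvgr _ _ _ _ (fun=> 0) (fun k => e (k + K)%N)); last 2 first.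
  - exact: cvg_cst.
  - exact: shift_cvg.
  near=> k; rewrite znorm_ge0 /=; apply: znorm_mono => // [i|j]; rewrite /= !mxE;
    case: ifP => _; (try by left); right; ring.
apply: (@squeeze_cvgr _ _ _ _ (fun=> 0)
   (fun k => znorm (vsub (vscale (tau (k + K)%N)^-1 (vsub (y (k + K)%N) z)) d))); last 2 first.
- exact: cvg_cst.
- exact: (shift_cvg _ _ _ uc).
near=> k; rewrite znorm_ge0 /=; apply: znorm_mono => // [i|j]; rewrite /= !mxE;
  case: ifP => _; (try by left); right; ring.
Unshelve. all: by end_near. Qed.


End M.

Theorem theorem2p3 (R : realType) (N0 N1 N : nat)
    (hN0 : (0 < N0)%N) (hN1 : (0 < N1)%N) (hN : (0 < N)%N)
    (X : 'M[R]_(N0, N)) (lam1 lam2 beta theta LF LR : R)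
    (hlam1 : 0 < lam1) (hlam2 : 0 < lam2) (hbeta : 0 < beta)
    (htheta : N%:R^-1 * normF X ^+ 2 < theta)
    (hLF : lip_const_on (Fobj X) (Omega_theta (N1:=N1) X lam1 lam2 beta theta) LF)
    (hLR : lip_const_on (Robj lam1 lam2) (Omega_theta (N1:=N1) X lam1 lam2 beta theta) LR)
    (hbetaL : LF + LR < beta)
    (zbar : var R N0 N1 N)
    (hZ : Zset X (alpha_of N1 X lam1 lam2 theta) zbar)
    (hO : Oobj X lam1 lam2 beta zbar < theta)
    (hstat : dstat_on (Oobj X lam1 lam2 beta) (Zset X (alpha_of N1 X lam1 lam2 theta)) zbar) :
  Omega1 X zbar /\
  dstat_on (Oobj X lam1 lam2 beta) (Omega2 X) zbar /\
  dstat_R X lam1 lam2 zbar.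
Proof.
have h1 : Omega1 X zbar := part1 _ _ _ _ _ _ _ _ hLF hLR hbetaL _ hZ hO hstat.
have h2 := part2 X lam1 lam2 beta theta hN0 hN1 hN hlam1 hlam2 hbeta htheta zbar hZ hO hstat.
split => //; split => //.
exact: part3 h1 h2.
Qed.
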